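(* Let $h_{SR_k}, h_{R_kD}, h_{SP}, h_{R_kP}, h_{R_kR_k} \in \mathbb{C}$, $\sigma_D > 0$, $\sigma_{R_k} > 0$, $\zeta \ge 0$, and set $\hat{\zeta} = |h_{R_kR_k}|^2\zeta$, assumed $>0$. Let $\bar{\mathcal{I}}_P > 0$, $P_S^{\max} > 0$, $P_{R_k}^{\max} > 0$. For $p_S, p_{R_k} \ge 0$ define $$G_k = \left[p_S^2|h_{SR_k}|^2 + \zeta p_{R_k}^2|h_{R_kR_k}|^2 + \sigma_{R_k}^2\right]^{-1/2},$$ $$A = h_{SP}\,p_S + h_{R_kP}\sqrt{\zeta}\,p_{R_k},\qquad B = \left(h_{SR_k}p_S + h_{R_kR_k}\sqrt{\zeta}\,p_{R_k} + \frac{\sigma_{R_k}}{\sqrt 2}(1+j)\right)G_k\,h_{R_kP}\,p_{R_k},$$ and $\mathcal{I}^{\mathrm{coh}}_k = (|A| - |B|)^2$. Consider the optimization problem (Problem 4) $$\max_{p_S, p_{R_k}} \ \breve{\mathcal{C}}_k(p_S, p_{R_k}) = \frac{\frac{p_{R_k}^2|h_{R_kD}|^2}{\sigma_D^2}\cdot\frac{p_S^2|h_{SR_k}|^2}{\hat{\zeta}p_{R_k}^2}}{1 + \frac{p_{R_k}^2|h_{R_kD}|^2}{\sigma_D^2} + \frac{p_S^2|h_{SR_k}|^2}{\hat{\zeta}p_{R_k}^2}}$$ subject to $$\mathcal{I}^{\mathrm{coh}}_k \le \bar{\mathcal{I}}_P,\quad 0 \le p_S \le \sqrt{P_S^{\max}},\quad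 0 \le p_{R_k} \le \sqrt{P_{R_k}^{\max}}.$$ Then Problem 4 is not a convex optimization problem in the joint variable $(p_S, p_{R_k})$.
   Context: $j$ is the imaginary unit. A maximization problem is called a convex optimization problem if its objective is a concave function over a convex feasible set. The objective is defined for $p_{R_k} > 0$. The variables $p_S = \sqrt{P_S}$, $p_{R_k} = \sqrt{P_{R_k}}$ are square roots of the transmit powers, and $\mathcal{I}^{\mathrm{coh}}_k$ is the interference at the primary receiver in the coherent scenario after optimal phase regulation at the relay. *)

(* Defs.v *)
From Stdlib Require Import Reals.
From Coquelicot Require Import Coquelicot.
Open Scope R_scope.

Definition Gk (hSR hRR : C) (sigmaR zeta pS pR : R) : R :=
  / sqrt (pS^2 * (Cmod hSR)^2 + zeta * pR^2 * (Cmod hRR)^2 + sigmaR^2).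

Definition Acoh (hSP hRP : C) (zeta pS pR : R) : C :=
  (hSP * RtoC pS + hRP * RtoC (sqrt zeta) * RtoC pR)%C.

Definition Bcoh (hSR hRR hRP : C) (sigmaR zeta pS pR : R) : C :=
  ((hSR * RtoC pS + hRR * RtoC (sqrt zeta) * RtoC pR
     + RtoC (sigmaR / sqrt 2) * (1 + Ci))
   * RtoC (Gk hSR hRR sigmaR zeta pS pR) * hRP * RtoC pR)%C.

Definition Icoh (hSR hRR hSP hRP : C) (sigmaR zeta pS pR : R) : R :=
  (Cmod (Acoh hSP hRP zeta pS pR) - Cmod (Bcoh hSR hRR hRP sigmaR zeta pS pR))^2.

Definition Cbreve (hSR hRD hRR : C) (sigmaD zeta pS pR : R) : R :=
  let zetahat := (Cmod hRR)^2 * zeta in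
  let x := pR^2 * (Cmod hRD)^2 / sigmaD^2 in
  let y := pS^2 * (Cmod hSR)^2 / (zetahat * pR^2) in
  (x * y) / (1 + x + y).

(* feasible set of Problem 4, intersected with the domain pR > 0 of the objective *)
Definition feasible (hSR hRR hSP hRP : C) (sigmaR zeta IP PSmax PRmax : R)
    (p : R * R) : Prop :=
  let (pS, pR) := p in
  Icoh hSR hRR hSP hRP sigmaR zeta pS pR <= IP /\
  0 <= pS <= sqrt PSmax /\ 0 < pR <= sqrt PRmax.

Definition convex_set (S : R * R -> Prop) : Prop :=
  forall u v t, S u -> S v -> 0 <= t <= 1 ->
    S (t * fst u + (1 - t) * fst v, t * snd u + (1 - t) * snd v).

Definition concave_on (S : R * R -> Prop) (f : R * R -> R) : Prop :=
  forall u v t, S u -> S v -> 0 <= t <= 1 ->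
    t * f u + (1 - t) * f v <=
    f (t * fst u + (1 - t) * fst v, t * snd u + (1 - t) * snd v).

Definition convex_max_problem (S : R * R -> Prop) (f : R * R -> R) : Prop :=
  convex_set S /\ concave_on S f.

(* Main.v *)
Require Import Defs.
From Stdlib Require Import Reals.
From Coquelicot Require Import Coquelicot.
From Stdlib Require Import Lra Psatz.
Open Scope R_scope.

Lemma A_bound hSP hRP zeta r : 0 <= zeta -> 0 <= r ->
  Cmod (Acoh hSP hRP zeta r r) <= (Cmod hSP + Cmod hRP * sqrt zeta) * r.
Proof.
  intros hz hr. unfold Acoh.
  eapply Rle_trans; [apply Cmod_triangle|].
  rewrite !Cmod_mult, !Cmod_R, !Rabs_pos_eq; [lra| |]; auto using sqrt_pos.
Qed.

Lemma C1i : Cmod (1 + Ci) = sqrt 2.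
Proof. unfold Cmod; simpl. f_equal. ring. Qed.

Lemma B_bound hSR hRR hRP sigmaR zeta r : 0 < sigmaR -> 0 <= zeta -> 0 <= r -> r <= 1 ->
  Cmod (Bcoh hSR hRR hRP sigmaR zeta r r) <=
    ((Cmod hSR + Cmod hRR * sqrt zeta + sigmaR) / sigmaR * Cmod hRP) * r.
Proof.
  intros hs hz hr hr1. unfold Bcoh.
  rewrite !Cmod_mult, !Cmod_R.
  set (G := Gk hSR hRR sigmaR zeta r r).
  assert (HG : 0 < G /\ G <= / sigmaR).
  { unfold G, Gk.
    assert (Hq : sigmaR <= sqrt (r ^ 2 * Cmod hSR ^ 2 + zeta * r ^ 2 * Cmod hRR ^ 2 + sigmaR ^ 2)).
    { rewrite <- (sqrt_pow2 sigmaR) at 1 by lra. apply sqrt_le_1_alt.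
      assert (0 <= r ^ 2 * Cmod hSR ^ 2) by (apply Rmult_le_pos; apply pow2_ge_0).
      assert (0 <= zeta * r ^ 2 * Cmod hRR ^ 2).
      { apply Rmult_le_pos; [apply Rmult_le_pos; [lra|apply pow2_ge_0]|apply pow2_ge_0]. }
      lra. }
    split. apply Rinv_0_lt_compat; lra. apply Rinv_le_contravar; lra. }
  assert (Hw : Cmod (hSR * r + hRR * sqrt zeta * r + RtoC (sigmaR / sqrt 2) * (1 + Ci))
     <= Cmod hSR + Cmod hRR * sqrt zeta + sigmaR).
  { eapply Rle_trans; [apply Cmod_triangle|].
    eapply Rle_trans; [apply Rplus_le_compat_r; apply Cmod_triangle|].
    rewrite !Cmod_mult, !Cmod_R, C1i.
    assert (hs2 : 0 < sqrt 2) by (apply sqrt_lt_R0; lra).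
    rewrite (Rabs_pos_eq (sigmaR / sqrt 2)) by (apply Rlt_le, Rdiv_lt_0_compat; lra).
    idtac.
    rewrite (Rabs_pos_eq r) by lra. rewrite (Rabs_pos_eq (sqrt zeta)) by apply sqrt_pos.
    replace (sigmaR / sqrt 2 * sqrt 2) with sigmaR by (field; lra).
    pose proof (Cmod_ge_0 hSR). pose proof (Cmod_ge_0 hRR). pose proof (sqrt_pos zeta).
    assert (Cmod hRR * sqrt zeta * r <= Cmod hRR * sqrt zeta).
    { rewrite <- (Rmult_1_r (Cmod hRR * sqrt zeta)) at 2. apply Rmult_le_compat_l; [apply Rmult_le_pos|]; lra. }
    nra. }
  rewrite (Rabs_pos_eq G) by lra. rewrite (Rabs_pos_eq r) by lra.
  pose proof (Cmod_ge_0 hRP).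
  pose proof (Cmod_ge_0 (hSR * r + hRR * sqrt zeta * r + RtoC (sigmaR / sqrt 2) * (1 + Ci))).
  set (W := Cmod (hSR * r + hRR * sqrt zeta * r + RtoC (sigmaR / sqrt 2) * (1 + Ci))) in *.
  set (K := Cmod hSR + Cmod hRR * sqrt zeta + sigmaR) in *.
  unfold Rdiv.
  assert (W * G <= K * / sigmaR).
  { apply Rmult_le_compat; lra. }
  assert (0 <= W * G) by nra.
  apply Rmult_le_compat_r; [lra|]. apply Rmult_le_compat_r; lra.
Qed.

Lemma Cb_diag hSR hRD hRR sigmaD zeta r : 0 < sigmaD -> 0 < Cmod hRR ^ 2 * zeta -> 0 < r ->
  Cbreve hSR hRD hRR sigmaD zeta r r =
  (Cmod hRD ^ 2 / sigmaD ^ 2) * r^2 * (Cmod hSR ^ 2 / (Cmod hRR ^ 2 * zeta)) /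
   (1 + (Cmod hRD ^ 2 / sigmaD ^ 2) * r^2 + (Cmod hSR ^ 2 / (Cmod hRR ^ 2 * zeta))).
Proof.
  intros hs hz hr. unfold Cbreve. cbv zeta.
assert (h1 : Cmod hRR ^ 2 * zeta <> 0) by lra.
  assert (h2 : r ^ 2 <> 0) by (apply pow_nonzero; lra).
  assert (h3 : sigmaD ^ 2 <> 0) by (apply pow_nonzero; lra).
  replace (r ^ 2 * Cmod hSR ^ 2 / (Cmod hRR ^ 2 * zeta * r ^ 2)) with (Cmod hSR ^ 2 / (Cmod hRR ^ 2 * zeta))
    by (field; repeat split; auto; intro HH; apply h1; nra).
  replace (r ^ 2 * Cmod hRD ^ 2 / sigmaD ^ 2) with (Cmod hRD ^ 2 / sigmaD ^ 2 * r ^ 2) by (field; lra).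
  reflexivity.


Qed.

Lemma key s y : 0 < s -> 0 < y -> 11 * s < 1 + y ->
  ~ (/2 * (s * y / (1 + s + y)) + (1 - /2) * (9 * s * y / (1 + 9 * s + y))
     <= 4 * s * y / (1 + 4 * s + y)).
Proof.
  intros hs hy h11 H.
  set (M := 1 + y) in *.
  replace (1 + s + y) with (M + s) in H by (unfold M; ring).
  replace (1 + 9*s + y) with (M + 9*s) in H by (unfold M; ring).
  replace (1 + 4*s + y) with (M + 4*s) in H by (unfold M; ring).
  assert (hM : 1 < M) by (unfold M; lra).
  assert (E : 4 * s * y / (M + 4 * s) - (/2 * (s * y / (M + s)) + (1 - /2) * (9 * s * y / (M + 9 * s)))
     = - (s * y * (2 * M * M - 22 * M * s)) / (2 * (M + s) * (M + 9 * s) * (M + 4 * s))).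
  { field. lra. }
  assert (P : 0 < (s * y * (2 * M * M - 22 * M * s)) / (2 * (M + s) * (M + 9 * s) * (M + 4 * s))).
  { apply Rdiv_lt_0_compat.
    - apply Rmult_lt_0_compat; [nra|]. nra.
    - repeat apply Rmult_lt_0_compat; lra. }
  unfold Rdiv in E, P. lra.
Qed.

Lemma feas_diag (hSR hRR hSP hRP : C) (sigmaR zeta IP PSmax PRmax r : R) :
  0 < sigmaR -> 0 <= zeta -> 0 < IP -> 0 < r -> r <= 1 -> r <= sqrt PSmax -> r <= sqrt PRmax ->
  ((Cmod hSP + Cmod hRP * sqrt zeta) + ((Cmod hSR + Cmod hRR * sqrt zeta + sigmaR) / sigmaR * Cmod hRP)) * r <= sqrt IP ->
  feasible hSR hRR hSP hRP sigmaR zeta IP PSmax PRmax (r, r).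
Proof.
  intros hs hz hIP hr hr1 hPS hPR hL. unfold feasible.
  split; [|split; split; lra].
  unfold Icoh.
  pose proof (A_bound hSP hRP zeta r hz (Rlt_le _ _ hr)).
  pose proof (B_bound hSR hRR hRP sigmaR zeta r hs hz (Rlt_le _ _ hr) hr1).
  pose proof (Cmod_ge_0 (Acoh hSP hRP zeta r r)).
  pose proof (Cmod_ge_0 (Bcoh hSR hRR hRP sigmaR zeta r r)).
  set (a := Cmod (Acoh hSP hRP zeta r r)) in *.
  set (b := Cmod (Bcoh hSR hRR hRP sigmaR zeta r r)) in *.
  assert (a + b <= sqrt IP) by lra.
  rewrite <- (pow2_sqrt IP) by lra.
  apply Rle_trans with ((a + b) ^ 2); [nra|].
  apply pow_incr; lra.
Qed.

Theorem lemma4 (hSR hRD hSP hRP hRR : C) (sigmaD sigmaR zeta IP PSmax PRmax : R)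
  (hsD : 0 < sigmaD) (hsR : 0 < sigmaR) (hz : 0 <= zeta)
  (hzhat : 0 < (Cmod hRR)^2 * zeta)
  (hIP : 0 < IP) (hPS : 0 < PSmax) (hPR : 0 < PRmax)
  (hSR0 : hSR <> 0%C) (hRD0 : hRD <> 0%C) :
  ~ convex_max_problem
      (feasible hSR hRR hSP hRP sigmaR zeta IP PSmax PRmax)
      (fun p => Cbreve hSR hRD hRR sigmaD zeta (fst p) (snd p)).
Proof.
  intros [_ Hc].
  set (L := (Cmod hSP + Cmod hRP * sqrt zeta) + ((Cmod hSR + Cmod hRR * sqrt zeta + sigmaR) / sigmaR * Cmod hRP)).
  assert (hL : 0 <= L).
  { unfold L. pose proof (Cmod_ge_0 hSP). pose proof (Cmod_ge_0 hRP). pose proof (Cmod_ge_0 hSR).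
    pose proof (Cmod_ge_0 hRR). pose proof (sqrt_pos zeta).
    assert (0 <= (Cmod hSR + Cmod hRR * sqrt zeta + sigmaR) / sigmaR).
    { apply Rlt_le, Rdiv_lt_0_compat; nra. }
    nra. }
  set (a := Cmod hRD ^ 2 / sigmaD ^ 2).
  assert (ha : 0 < a).
  { unfold a. apply Rdiv_lt_0_compat; [|apply pow_lt; lra].
    apply pow_lt. apply Cmod_gt_0; auto. }
  set (y := Cmod hSR ^ 2 / (Cmod hRR ^ 2 * zeta)).
  assert (hy : 0 < y).
  { unfold y. apply Rdiv_lt_0_compat; auto. apply pow_lt. apply Cmod_gt_0; auto. }
  pose proof (sqrt_lt_R0 _ hPS). pose proof (sqrt_lt_R0 _ hPR). pose proof (sqrt_lt_R0 _ hIP).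
  set (m := Rmin 1 (Rmin (sqrt PSmax) (Rmin (sqrt PRmax) (Rmin (sqrt IP / (L + 1)) (1 / (a + 1)))))).
  assert (hm1 : m <= 1) by apply Rmin_l.
  assert (hm2 : m <= sqrt PSmax) by (unfold m; eapply Rle_trans; [apply Rmin_r|apply Rmin_l]).
  assert (hm3 : m <= sqrt PRmax) by (unfold m; eapply Rle_trans; [apply Rmin_r|];
     eapply Rle_trans; [apply Rmin_r|apply Rmin_l]).
  assert (hm4 : m <= sqrt IP / (L + 1)) by (unfold m; eapply Rle_trans; [apply Rmin_r|];
     eapply Rle_trans; [apply Rmin_r|]; eapply Rle_trans; [apply Rmin_r|apply Rmin_l]).
  assert (hm5 : m <= 1 / (a + 1)) by (unfold m; eapply Rle_trans; [apply Rmin_r|];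
     eapply Rle_trans; [apply Rmin_r|]; eapply Rle_trans; [apply Rmin_r|apply Rmin_r]).
  assert (hm0 : 0 < m).
  { unfold m. repeat apply Rmin_pos; try lra.
    apply Rdiv_lt_0_compat; lra. apply Rdiv_lt_0_compat; lra. }
  assert (hLm : L * m <= sqrt IP).
  { apply Rmult_le_compat_l with (r := L) in hm4; auto.
    assert (L * (sqrt IP / (L + 1)) <= sqrt IP).
    { apply Rmult_le_reg_r with (L + 1); [lra|].
      replace (L * (sqrt IP / (L + 1)) * (L + 1)) with (L * sqrt IP) by (field; lra). nra. }
    lra. }
  assert (ham : a * m <= 1).
  { apply Rmult_le_compat_l with (r := a) in hm5; [|lra].
    assert (a * (1 / (a + 1)) <= 1).
    { apply Rmult_le_reg_r with (a + 1); [lra|].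
      replace (a * (1 / (a + 1)) * (a + 1)) with a by (field; lra). lra. }
    lra. }
  set (e := m / 11).
  assert (he : 0 < e) by (unfold e; lra).
  assert (F : forall r, 0 < r -> r <= m -> feasible hSR hRR hSP hRP sigmaR zeta IP PSmax PRmax (r, r)).
  { intros r hr hrm. apply feas_diag; try lra.
    fold L. apply Rle_trans with (L * m); [|lra]. apply Rmult_le_compat_l; lra. }
  specialize (Hc (e, e) (3 * e, 3 * e) (/2) (F e he ltac:(unfold e; lra))
    (F (3 * e) ltac:(lra) ltac:(unfold e; lra)) ltac:(lra)).
  simpl in Hc.
  replace (/ 2 * e + (1 - / 2) * (3 * e)) with (2 * e) in Hc by field.
  rewrite !Cb_diag in Hc by lra.
  fold a y in Hc.
  apply (key (a * e ^ 2) y).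
  - apply Rmult_lt_0_compat; [lra|apply pow_lt; lra].
  - exact hy.
  - assert (a * e * e <= a * m * e) by (apply Rmult_le_compat_r; [lra|]; apply Rmult_le_compat_l; unfold e; lra).
    assert (a * m * e <= e) by (rewrite <- (Rmult_1_l e) at 2; apply Rmult_le_compat_r; lra).
    unfold e in *. simpl. lra.
  - replace (a * (3 * e) ^ 2) with (9 * (a * e ^ 2)) in Hc by ring.
    replace (a * (2 * e) ^ 2) with (4 * (a * e ^ 2)) in Hc by ring.
    replace (a * (3 * e) ^ 2 * y) with (9 * (a * e ^ 2) * y) in Hc by ring.
    replace (a * (2 * e) ^ 2 * y) with (4 * (a * e ^ 2) * y) in Hc by ring.
    exact Hc.
Qed.
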